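(* Let $d\ge3$, $h\ge1$, and for $1\le n\le h$ let $\mathbf{y}_n := \sum_{i\in S_n}\mathbf{x}_i$, where $S_n$ is the set of vertices at distance $n$ from the root. Then the order of $\bar{\mathbf{y}}_n$ in $G(d,h)$ is $(d-1)^{h+1-n}$.
   Context: Let $\mathcal{T}(d,h)$ be the rooted tree in which the root $0$ has $d$ children, every vertex at distance $1,\dots,h-1$ from the root has $d-1$ children, and the vertices at distance $h$ are leaves. Let $V$ be its vertex set, $A$ its adjacency matrix, $\Delta := dI-A$, and $\Lambda\subset\mathbb{Z}^V$ the lattice spanned by the rows of $\Delta$. Then $G(d,h):=\mathbb{Z}^V/\Lambda$; $\{\mathbf{x}_i:i\in V\}$ is the standard basis of $\mathbb{Z}^V$ and $\bar{\mathbf{v}}$ denotes the image of $\mathbf{v}\in\mathbb{Z}^V$ in $G(d,h)$. *)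

(* Defs.v *)
From mathcomp Require Import all_boot all_order all_algebra.
Unset Printing Implicit Defensive.
Import GRing.Theory Num.Theory.
Local Open Scope ring_scope.

(* Vertices of T(d,h) are encoded as paths from the root: the root is [::],
   the children of the root are [:: i] for i < d, and the children of a
   non-root vertex s are rcons s i for i < d-1.  A vertex at distance n from
   the root is a sequence of length n. *)
Definition children (d : nat) (s : seq nat) : seq (seq nat) :=
  [seq rcons s i | i <- iota 0 (if s is [::] then d else d.-1)].

Fixpoint level (d n : nat) : seq (seq nat) :=
  if n is n'.+1 then flatten [seq children d s | s <- level d n'] else [:: [::]].

Definition tree_verts (d h : nat) : seq (seq nat) :=
  flatten [seq level d n | n <- iota 0 h.+1].

Definition TV (d h : nat) : finType := seq_sub (tree_verts d h).

Definition is_child (s t : seq nat) : bool :=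
  (size t == (size s).+1)%N && (take (size s) t == s).

Definition tree_adj (s t : seq nat) : bool := is_child s t || is_child t s.

Definition Delta {d h : nat} (i j : TV d h) : int :=
  (d%:Z * (nat_of_bool (i == j))%:Z) - (nat_of_bool (tree_adj (val i) (val j)))%:Z.

Definition in_lattice (d h : nat) (v : TV d h -> int) : Prop :=
  exists c : TV d h -> int, forall j, v j = \sum_(i : TV d h) c i * Delta i j.

Definition ylevel (d h n : nat) : TV d h -> int :=
  fun j => (nat_of_bool (size (val j) == n))%:Z.

(* The order of vbar in G(d,h) = Z^V / Lambda is m (m > 0, minimal with m v in Lambda). *)
Definition order_in_G (d h : nat) (v : TV d h -> int) (m : nat) : Prop :=
  [/\ (0 < m)%N,
      @in_lattice d h (fun j => m%:Z * v j)
    & forall k : nat, (0 < k)%N -> @in_lattice d h (fun j => k%:Z * v j) -> (m <= k)%N].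

(* Main.v *)
Require Import Defs.
From mathcomp Require Import all_boot all_order all_algebra.
From mathcomp Require Import zify ring lra.

Section Helpers.
Import GRing.Theory Num.Theory.
Local Open Scope ring_scope.

Definition good (d : nat) (s : seq nat) : bool :=
  if s is a :: t then (a < d)%N && all (fun x => (x < d.-1)%N) t else true.
Definition cnt (d : nat) (s : seq nat) : nat := if s is [::] then d else d.-1.

Lemma good_rcons d p k : good d (rcons p k) = good d p && (k < cnt d p)%N.
Proof.
case: p => [|a t] /=; first by rewrite andbT.
by rewrite all_rcons; case: (a < d)%N; case: (k < d.-1)%N; case: (all _ t).
Qed.

Lemma is_child_rcons p q k : is_child p (rcons q k) = (q == p).
Proof.
rewrite /is_child size_rcons eqSS; case: eqP => [<-|ne] /=.
  by rewrite -cats1 take_size_cat.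
by apply/esym/eqP => qp; apply: ne; rewrite qp.
Qed.

Lemma is_child_nil p : is_child p [::] = false.
Proof. by []. Qed.

Lemma mem_level d n x : (x \in level d n) = (size x == n) && good d x.
Proof.
elim: n x => [|n IH] x.
  by case: x.
rewrite /=; apply/flattenP/idP.
  case=> _ /mapP [p pl ->] /mapP [i]; rewrite mem_iota => /andP[_ ilt] ->.
  move: pl; rewrite IH size_rcons eqSS good_rcons => /andP[-> ->] /=.
  by case: p ilt.
move=> /andP[sz g]; case/lastP: x sz g => [//|q k].
rewrite size_rcons good_rcons eqSS => sz /andP[gq kc].
exists (children d q); first by apply/mapP; exists q => //; rewrite IH sz gq.
apply/mapP; exists k => //; rewrite mem_iota /=; by case: q kc {sz gq}.
Qed.

Lemma mem_tv d h x : (x \in tree_verts d h) = (size x <= h)%N && good d x.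
Proof.
apply/flattenP/idP.
  case=> L /mapP [m]; rewrite mem_iota => /andP[_ mh] ->.
  by rewrite mem_level => /andP[/eqP -> ->]; rewrite andbT -ltnS.
move=> /andP[sz g]; exists (level d (size x)).
  by apply/mapP; exists (size x) => //; rewrite mem_iota.
by rewrite mem_level eqxx.
Qed.

Lemma sum_TV d h (F : seq nat -> int) :
  \sum_(i : TV d h) F (val i) = \sum_(x <- undup (tree_verts d h)) F x.
Proof.
rewrite -(big_map val xpredT F); apply: perm_big; apply: uniq_perm.
- by rewrite map_inj_uniq ?index_enum_uniq //; exact: val_inj.
- exact: undup_uniq.
move=> x; rewrite mem_undup; apply/mapP/idP.
  by case=> i _ ->; exact: valP.
move=> xin; exists (SeqSub xin); [exact: mem_index_enum | by []].
Qed.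

Lemma sum_filter_perm d h (P : pred (seq nat)) (L : seq (seq nat)) (G : seq nat -> int) :
  uniq L -> (forall x, ((x \in tree_verts d h) && P x) = (x \in L)) ->
  \sum_(i : TV d h | P (val i)) G (val i) = \sum_(x <- L) G x.
Proof.
move=> uL memL.
rewrite big_mkcond /=.
rewrite (sum_TV d h (fun x => if P x then G x else 0)).
rewrite -big_mkcond -big_filter.
apply: perm_big; apply: uniq_perm => //; first exact: filter_uniq (undup_uniq _).
by move=> x; rewrite mem_filter mem_undup andbC memL.
Qed.

Lemma mul_b (x : int) (b : bool) : x * (nat_of_bool b)%:Z = if b then x else 0.
Proof. by case: b; rewrite ?mulr1 ?mulr0. Qed.

Lemma sumA d h (f : nat -> int) y : y \in tree_verts d h ->
  \sum_(i : TV d h | is_child (val i) y) f (size (val i)) =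
  if size y is s.+1 then f s else 0.
Proof.
case/lastP: y => [|q k] yin.
  rewrite (sum_filter_perm d h (fun x => is_child x [::]) [::] (fun x => f (size x))) ?big_nil //.
  by move=> x; rewrite is_child_nil andbF.
rewrite (sum_filter_perm d h (fun x => is_child x (rcons q k)) [:: q] (fun x => f (size x))) ?big_seq1 ?size_rcons //.
move=> x; rewrite is_child_rcons mem_seq1 eq_sym; case: eqP => [->|_]; rewrite ?andbF ?andbT //.
move: yin; rewrite !mem_tv size_rcons good_rcons => /andP[sz /andP[-> _]].
by rewrite andbT; exact: ltnW.
Qed.

Lemma sumB d h (f : nat -> int) p : p \in tree_verts d h ->
  \sum_(i : TV d h | is_child p (val i)) f (size (val i)) =
  if (size p < h)%N then (cnt d p)%:Z * f (size p).+1 else 0.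
Proof.
move=> pin; case: ltnP => ph.
  rewrite (sum_filter_perm d h (is_child p) [seq rcons p k | k <- iota 0 (cnt d p)] (fun x => f (size x))).
  - rewrite big_map.
    rewrite (eq_bigr (fun _ => f (size p).+1)); last by move=> k _; rewrite size_rcons.
    rewrite big_const_seq count_predT size_iota iter_addr_0.
    by rewrite -mulr_natl natz.
  - by rewrite map_inj_uniq ?iota_uniq //; exact: rcons_injr.
  move=> x; case/lastP: x => [|q k].
    rewrite andbF; apply/esym/mapP => -[k _] /(congr1 size).
    by rewrite size_rcons.
  rewrite is_child_rcons; case: (eqVneq q p) => [->|neq]; last first.
    by rewrite andbF; apply/esym/mapP => -[k' _] /eqP; rewrite eqseq_rcons (negbTE neq).
  rewrite andbT mem_map ?mem_iota; last exact: rcons_injr.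
  by move: pin; rewrite !mem_tv size_rcons good_rcons ph => /andP[_ ->].
rewrite (sum_filter_perm d h (is_child p) [::] (fun x => f (size x)));
  [by rewrite big_nil | by [] | ].
move=> x; rewrite in_nil mem_tv; apply/negbTE; apply/negP.
move=> /andP[/andP[sz _] /andP[/eqP sx _]].
by move: sz; rewrite sx ltnNge ph.
Qed.

Lemma radial d h (f : nat -> int) (j : TV d h) :
  \sum_(i : TV d h) f (size (val i)) * Delta i j =
  d%:Z * f (size (val j)) - (if size (val j) is s.+1 then f s else 0)
   - (if (size (val j) < h)%N then (cnt d (val j))%:Z * f (size (val j)).+1 else 0).
Proof.
rewrite /Delta.
under eq_bigr => i _ do rewrite mulrBr mulrCA mul_b mul_b.
rewrite sumrB (bigD1 j) //= eqxx big1 => [|i /negbTE ->]; last by rewrite mulr0.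
rewrite addr0 mulrC -addrA -opprD; congr (_ - _).
transitivity (\sum_(i : TV d h | is_child (val i) (val j)) f (size (val i)) +
              \sum_(i : TV d h | is_child (val j) (val i)) f (size (val i))).
  rewrite !(big_mkcond (fun i => is_child _ _)) -big_split /=.
  apply: eq_bigr => i _; rewrite /tree_adj.
  case c1: (is_child (val i) (val j)); case c2: (is_child (val j) (val i)) => /=;
    rewrite ?addr0 ?add0r //.
  move: c1 c2; rewrite /is_child => /andP[/eqP s1 _] /andP[/eqP s2 _].
  rewrite s2 in s1; have : (size (val j) < size (val j))%N by rewrite {2}s1 ltnS leqnSn.
  by rewrite ltnn.
rewrite sumA; last exact: valP.
rewrite sumB; last exact: valP.
by [].
Qed.

Lemma cnt_size d s : cnt d s = if size s == 0%N then d else d.-1.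
Proof. by case: s. Qed.

Lemma size_le (d h : nat) (j : TV d h) : (size (val j) <= h)%N.
Proof. by have := valP j; rewrite mem_tv => /andP[]. Qed.

Fixpoint sk (e k : nat) : nat := if k is k'.+1 then (1 + e * sk e k')%N else 1%N.

Lemma skS2 e k : sk e k.+1 = (sk e k + e ^ k.+1)%N.
Proof.
elim: k => [|k IH]; first by rewrite /= muln1 expn1 addnC.
have -> : sk e k.+2 = (1 + e * sk e k.+1)%N by [].
by rewrite {1}IH mulnDr addnA -expnS.
Qed.

Lemma sk_coprime e k : coprime e (sk e k).
Proof.
case: k => [|k] /=; first exact: coprimen1.
by rewrite -coprime_modr addnC mulnC modnMDl coprime_modr coprimen1.
Qed.

Lemma inner e K :
  (e.+1)%:Z * (sk e K.+1)%:Z - (sk e K.+2)%:Z - e%:Z * (sk e K)%:Z = 0.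
Proof.
rewrite [sk e K.+2]/= [sk e K.+1]/=.
rewrite !PoszD !PoszM -addn1 PoszD; ring.
Qed.

Lemma upper_arith e h n m : (1 <= n <= h)%N -> (m <= h)%N ->
  let g := fun m => (sk e (h - maxn m n))%:Z in
  (e ^ (h + 1 - n))%:Z * (nat_of_bool (m == n))%:Z =
  (e.+1)%:Z * g m - (if m is s.+1 then g s else 0)
   - (if (m < h)%N then (if m == 0%N then e.+1 else e.+1.-1)%:Z * g m.+1 else 0).
Proof.
move=> /andP[n1 nh] mh g; rewrite /g; clear g.
case: m mh => [|s] mh.
  have -> : (0 == n) = false by case: n n1 nh.
  have -> : (0 < h)%N by lia.
  have -> : maxn 0 n = n by lia.
  have -> : maxn 1 n = n by lia.
  by rewrite /= mulr0 subr0 subrr.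
have [sn|[sn|sn]] : (s.+1 < n)%N \/ (n < s.+1)%N \/ s.+1 = n by lia.
- have -> : (s.+1 == n) = false by lia.
  have -> : (s.+1 < h)%N by lia.
  have -> : maxn s.+1 n = n by lia.
  have -> : maxn s n = n by lia.
  have -> : maxn s.+2 n = n by lia.
  rewrite /= mulr0 -addn1 PoszD; ring.
- have -> : (s.+1 == n) = false by lia.
  rewrite mulr0.
  have -> : maxn s.+1 n = s.+1 by lia.
  have -> : maxn s n = s by lia.
  have [sh|sh] : (s.+1 < h)%N \/ s.+1 = h by lia.
    rewrite sh.
    have -> : maxn s.+2 n = s.+2 by lia.
    have -> : (h - s.+1 = (h - s.+2).+1)%N by lia.
    have -> : (h - s = (h - s.+2).+2)%N by lia.
    by rewrite /= -(inner e (h - s.+2)).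
  rewrite sh subnn /= ltnn; have -> : (h - s = 1)%N by lia.
  rewrite /= muln1 subr0 -addn1 !PoszD; ring.
- rewrite sn eqxx mulr1.
  have -> : maxn n n = n by lia.
  have -> : maxn s n = n by lia.
  have [nh'|nh'] : (n < h)%N \/ n = h by lia.
    rewrite nh'.
    have -> : maxn n.+1 n = n.+1 by lia.
    have -> : (h - n = (h - n.+1).+1)%N by lia.
    have -> : (h + 1 - n = (h - n.+1).+2)%N by lia.
    set K := (h - n.+1)%N.
    have -> : (n == 0%N) = false by lia.
    rewrite [e.+1.-1]/= skS2 !expnS !PoszD !PoszM -addn1 PoszD; ring.
  rewrite nh' subnn ltnn addnC addnK /= expn1 -addn1 PoszD; ring.
Qed.

Definition aa e h m : int := (sk e (h - m))%:Z.

Lemma lower_arith e h m : (1 <= h)%N -> (m <= h)%N ->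
  (e.+1)%:Z * aa e h m - (if m is s.+1 then aa e h s else 0)
   - (if (m < h)%N then (if m == 0%N then e.+1 else e.+1.-1)%:Z * aa e h m.+1 else 0)
  = if m == 0%N then (e.+1 * e ^ h)%:Z else 0.
Proof.
move=> h1 mh; rewrite /aa.
case: m mh => [|s] mh.
  have -> : (0 < h)%N by lia.
  rewrite subn0 /= subr0.
  have -> : h = (h - 1).+1 by lia.
  rewrite subSS subn0 skS2 !PoszD !PoszM; ring.
have [sh|sh] : (s.+1 < h)%N \/ s.+1 = h by lia.
  rewrite sh /=.
  have -> : (h - s.+1 = (h - s.+2).+1)%N by lia.
  have -> : (h - s = (h - s.+2).+2)%N by lia.
  exact: inner.
rewrite sh subnn ltnn /=; have -> : (h - s = 1)%N by lia.
rewrite /= muln1 -addn1 !PoszD; have -> : (h == 0%N) = false by lia.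
ring.
Qed.

Lemma Delta_sym d h (i j : TV d h) : Delta i j = Delta j i.
Proof. by rewrite /Delta eq_sym /tree_adj orbC. Qed.

Lemma radial2 d h (f : nat -> int) (j : TV d h) :
  \sum_(i : TV d h) f (size (val i)) * Delta i j =
  d%:Z * f (size (val j)) - (if size (val j) is s.+1 then f s else 0)
   - (if (size (val j) < h)%N then (if size (val j) == 0%N then d else d.-1)%:Z * f (size (val j)).+1 else 0).
Proof. by rewrite radial cnt_size. Qed.

Lemma count0 d h : \sum_(j : TV d h) ylevel d h 0 j = 1.
Proof.
rewrite (eq_bigr (fun j : TV d h => if size (val j) == 0%N then 1 else 0)); last first.
  by move=> j _; rewrite /ylevel; case: (size _ == 0%N).
rewrite -big_mkcond.
rewrite (sum_filter_perm d h (fun x => size x == 0%N) [:: [::]] (fun _ => 1));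
  [by rewrite big_seq1 | by [] | ].
move=> x; rewrite mem_seq1; case: x => [|a t].
  by rewrite mem_tv.
by rewrite andbF.
Qed.

Lemma countS d h m : (m < h)%N ->
  \sum_(j : TV d h) ylevel d h m.+1 j =
  (if m == 0%N then d else d.-1)%:Z * \sum_(j : TV d h) ylevel d h m j.
Proof.
move=> mh; rewrite /ylevel.
transitivity (\sum_(j : TV d h) \sum_(i : TV d h | is_child (val i) (val j))
                  (nat_of_bool (size (val j) == m.+1))%:Z).
  apply: eq_bigr => j _.
  rewrite (sumA d h (fun _ => (nat_of_bool (size (val j) == m.+1))%:Z) (val j) (valP j)).
  by case: (size _).
under eq_bigr => j _ do rewrite big_mkcond.
rewrite exchange_big /= mulr_sumr; apply: eq_bigr => i _.
rewrite -big_mkcond.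
rewrite (sumB d h (fun x => (nat_of_bool (x == m.+1))%:Z) (val i) (valP i)).
rewrite cnt_size eqSS.
case: (eqVneq (size (val i)) m) => [->|ne] /=; first by rewrite mh mulr1.
by case: ifP; rewrite ?mulr0.
Qed.

Lemma count_level d h m : (1 <= m <= h)%N ->
  \sum_(j : TV d h) ylevel d h m j = (d * d.-1 ^ m.-1)%:Z.
Proof.
elim: m => [|m IH] /andP[m1 mh] //.
rewrite countS; last by lia.
case: m IH m1 mh => [|m] IH m1 mh.
  by rewrite count0 /= muln1 mulr1.
rewrite IH; last by lia.
rewrite [m.+1 == 0%N]/= [m.+1.-1]/= [m.+2.-1]/= expnS !PoszM; ring.
Qed.

Lemma main_upper e h n : (1 <= n <= h)%N ->
  in_lattice e.+1 h (fun j => (e ^ (h + 1 - n))%N%:Z * ylevel e.+1 h n j).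
Proof.
move=> nh.
exists (fun i => (sk e (h - maxn (size (val i)) n))%:Z) => j.
rewrite (radial2 e.+1 h (fun m => (sk e (h - maxn m n))%:Z)).
have U := (upper_arith e h n (size (val j)) nh (size_le _ _ j)).
exact U.
Qed.

Lemma main_lower e h n k : (2 <= e)%N -> (1 <= h)%N -> (1 <= n <= h)%N -> (0 < k)%N ->
  in_lattice e.+1 h (fun j => k%:Z * ylevel e.+1 h n j) -> (e ^ (h + 1 - n) <= k)%N.
Proof.
move=> e2 h1 nh k0 [c Hc].
have H1 : \sum_(j : TV e.+1 h) (k%:Z * ylevel e.+1 h n j) * aa e h (size (val j)) =
   k%:Z * (sk e (h - n))%:Z * \sum_(j : TV e.+1 h) ylevel e.+1 h n j.
  rewrite mulr_sumr; apply: eq_bigr => j _; rewrite /ylevel /aa.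
  by case: eqP => [->|_]; rewrite /= ?mulr1 ?mulr0 ?mul0r.
have H2 : \sum_(j : TV e.+1 h) (k%:Z * ylevel e.+1 h n j) * aa e h (size (val j)) =
   (\sum_(i : TV e.+1 h) c i * (nat_of_bool (size (val i) == 0%N))%:Z) * (e.+1 * e ^ h)%N%:Z.
  rewrite (eq_bigr (fun j => (\sum_i c i * Delta i j) * aa e h (size (val j))));
    last by move=> j _; rewrite Hc.
  under eq_bigr => j _ do rewrite mulr_suml.
  rewrite exchange_big /= mulr_suml; apply: eq_bigr => i _.
  under eq_bigr => j _ do rewrite -mulrA.
  rewrite -mulr_sumr -mulrA; congr (_ * _).
  rewrite (eq_bigr (fun j => aa e h (size (val j)) * Delta j i));
    last by move=> j _; rewrite mulrC Delta_sym.
  rewrite (radial2 e.+1 h (aa e h) i) (lower_arith e h (size (val i)) h1 (size_le _ _ i)).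
  by case: (size _ == 0%N); rewrite ?mul1r ?mul0r.
rewrite count_level // in H1.
have E0 := etrans (esym H1) H2.
move: E0; generalize (\sum_(i : TV e.+1 h) c i * (nat_of_bool (size (val i) == 0%N))%:Z) => C E0.
have {}E0 : (k * sk e (h - n) * (e.+1 * e ^ n.-1))%N%:Z = C * (e.+1 * e ^ h)%N%:Z.
  by rewrite -E0 !PoszM.
have E1 := congr1 absz E0.
rewrite abszM /= in E1.
have eh : (e ^ h = e ^ n.-1 * e ^ (h + 1 - n))%N.
  by rewrite -expnD; have -> : (n.-1 + (h + 1 - n) = h)%N by lia.
have E2 : ((k * sk e (h - n)) * (e.+1 * e ^ n.-1) = (`|C| * e ^ (h + 1 - n)) * (e.+1 * e ^ n.-1))%N.
  by rewrite E1 eh; ring.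
move/eqP: E2; rewrite eqn_pmul2r; last by rewrite muln_gt0 expn_gt0; apply/andP; split; lia.
move/eqP => E3.
have : (e ^ (h + 1 - n) %| k * sk e (h - n))%N by apply/dvdnP; exists `|C|%N; rewrite E3.
rewrite Gauss_dvdl; last exact: coprimeXl (sk_coprime _ _).
by move/dvdn_leq; apply.
Qed.
End Helpers.

Theorem proposition7p7 (d h n : nat) :
  (3 <= d)%N -> (1 <= h)%N -> (1 <= n <= h)%N ->
  order_in_G d h (ylevel d h n) ((d - 1) ^ (h + 1 - n))%N.
Proof.
move=> d3 h1 nh.
have [e de] : exists e, d = e.+1 by exists d.-1; lia.
subst d; rewrite subSS subn0.
split.
- by rewrite expn_gt0; apply/orP; left; lia.
- exact: main_upper.
- move=> k k0 Hk; apply: main_lower k0 Hk => //; lia.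
Qed.
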